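(* Let $q \ge 2$ and $n$ be integers, let $k$ be an integer with $k \le \lfloor n/2\rfloor - 1$, and let $p_{k+1}, p_{k+2}, \dots, p_n$ be real numbers such that $p_i \ge 0$ for all $i \in [k+1, n-(k+1)]$. If $$\sum_{i=j}^{n} p_i \binom{n-j}{i-j} \le 0 \quad \text{for all } j \in [k+1, n],$$ and $$\sum_{i=\lfloor n/2\rfloor+1}^{n} p_i \left(q^{2i-n}-1\right)\binom{n}{i} > 0,$$ then $k$-uniform states in $(\mathbb{C}^q)^{\otimes n}$ do not exist.
   Context: For integers $a \le b$, $[a,b]$ denotes $\{a, a+1, \dots, b\}$. A pure state $|\psi\rangle \in (\mathbb{C}^q)^{\otimes n}$ is called $k$-uniform if, with $\rho = |\psi\rangle\langle\psi|$, for every subset $S \subseteq \{1,\dots,n\}$ with $|S| = k$ the reduced state of $\rho$ on the parties in $S$ equals $I/q^k$, where $I$ is the identity on $(\mathbb{C}^q)^{\otimes k}$. *)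

(* Defs.v *)
From HB Require Import structures.
From mathcomp Require Import all_boot all_order all_algebra.
From mathcomp Require Import reals.
From mathcomp.real_closed Require Import complex.
Set Implicit Arguments. Unset Strict Implicit. Unset Printing Implicit Defensive.
Import Order.TTheory GRing.Theory Num.Theory.
Local Open Scope ring_scope.

(* Computational basis of (C^q)^{\otimes n}: configurations 'I_n -> 'I_q.
   A vector of (C^q)^{\otimes n} is its coefficient function. *)
Definition config (n q : nat) := {ffun 'I_n -> 'I_q}.

Definition glue (n q : nat) (y : config n q) (S : {set 'I_n}) (z : config n q)
  : config n q := [ffun i => if i \in S then y i else z i].

Definition is_pure_state (R : realType) (n q : nat) (psi : config n q -> R[i]) :=
  \sum_(x : config n q) psi x * (psi x)^* = 1.

(* Matrix entry <x_S| Tr_{S^c} |psi><psi| |y_S> of the reduced state on S;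
   it only depends on the values of x and y on S. *)
Definition reduced_entry (R : realType) (n q : nat) (psi : config n q -> R[i])
  (S : {set 'I_n}) (x y : config n q) : R[i] :=
  \sum_(z : config n q | [forall i, (i \in S) ==> (z i == x i)])
     psi z * (psi (glue y S z))^*.

Definition k_uniform (R : realType) (n q k : nat) (psi : config n q -> R[i]) :=
  is_pure_state psi /\
  forall S : {set 'I_n}, #|S| = k ->
  forall x y : config n q,
    reduced_entry psi S x y =
      (if [forall i, (i \in S) ==> (x i == y i)] then (q%:R ^+ k)^-1 else 0).

(* Main.v *)
Require Import Defs.
From HB Require Import structures.
From mathcomp Require Import all_boot all_order all_algebra.
From mathcomp Require Import reals.
From mathcomp.real_closed Require Import complex.
From mathcomp Require Import ring zify.
Import Order.TTheory GRing.Theory Num.Theory.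
Local Open Scope ring_scope.

Set Implicit Arguments. Unset Strict Implicit. Unset Printing Implicit Defensive.

Section Kern.
Variables (R : realType) (n q : nat) (psi : config n q -> R[i]).
Local Notation C := R[i].
Local Notation cfg := (config n q).

Definition kernP (Phi : cfg -> cfg -> cfg -> cfg -> C) : C :=
  \sum_(u : cfg) \sum_(v : cfg) \sum_(u' : cfg) \sum_(v' : cfg)
    psi u * psi v * (psi u')^* * (psi v')^* * Phi u v u' v'.

Definition siteK (K : 'I_n -> 'I_q -> 'I_q -> 'I_q -> 'I_q -> C) u v u' v' :=
  \prod_i K i (u i) (v i) (u' i) (v' i).

Lemma kernP_sum (I : finType) (P : pred I) (Phi : I -> cfg -> cfg -> cfg -> cfg -> C) :
  kernP (fun u v u' v' => \sum_(t | P t) Phi t u v u' v') = \sum_(t | P t) kernP (Phi t).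
Proof.
rewrite /kernP.
under eq_bigr do under eq_bigr do under eq_bigr do under eq_bigr do rewrite mulr_sumr.
under eq_bigr do under eq_bigr do under eq_bigr do rewrite exchange_big.
under eq_bigr do under eq_bigr do rewrite exchange_big.
under eq_bigr do rewrite exchange_big.
by rewrite exchange_big.
Qed.

Lemma kernP_scale (c : C) Phi :
  kernP (fun u v u' v' => c * Phi u v u' v') = c * kernP Phi.
Proof.
rewrite /kernP mulr_sumr; apply: eq_bigr => u _; rewrite mulr_sumr; apply: eq_bigr => v _.
rewrite mulr_sumr; apply: eq_bigr => u' _; rewrite mulr_sumr; apply: eq_bigr => v' _.
by rewrite mulrCA.
Qed.

Lemma kern_sos (J : finType) (w : 'I_n -> J -> C) (G : 'I_n -> J -> 'I_q -> 'I_q -> C) K :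
  (forall i j, 0 <= w i j) ->
  (forall i a b a' b', K i a b a' b' = \sum_j w i j * G i j a a' * (G i j b' b)^*) ->
  0 <= kernP (siteK K).
Proof.
move=> w0 HK.
have E : forall u v u' v', siteK K u v u' v' =
   \sum_(f : {ffun 'I_n -> J}) (\prod_i w i (f i)) *
      ((\prod_i G i (f i) (u i) (u' i)) * (\prod_i G i (f i) (v' i) (v i))^*).
  move=> u v u' v'; rewrite /siteK.
  under eq_bigr do rewrite HK.
  rewrite bigA_distr_bigA /=; apply: eq_bigr => f _.
  rewrite rmorph_prod -!big_split /=; apply: eq_bigr => i _; by rewrite mulrA.
rewrite (_ : kernP _ = kernP (fun u v u' v' => \sum_(f : {ffun 'I_n -> J}) (\prod_i w i (f i)) *
      ((\prod_i G i (f i) (u i) (u' i)) * (\prod_i G i (f i) (v' i) (v i))^*))); last first.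
  by rewrite /kernP; do 4! (apply: eq_bigr => ? _); rewrite E.
rewrite kernP_sum; apply: sumr_ge0 => f _.
rewrite kernP_scale; apply: mulr_ge0; first by apply: prodr_ge0.
set A := fun x y : cfg => \prod_i G i (f i) (x i) (y i).
have -> : kernP (fun u v u' v' => A u u' * (A v' v)^*) =
   (\sum_u \sum_u' psi u * (psi u')^* * A u u') *
   (\sum_u \sum_u' psi u * (psi u')^* * A u u')^*.
  rewrite /kernP [RHS]mulr_suml; apply: eq_bigr => u _.
  rewrite exchange_big [RHS]mulr_suml; apply: eq_bigr => u' _.
  rewrite !rmorph_sum /= mulr_sumr exchange_big /=; apply: eq_bigr => v _.
  rewrite rmorph_sum /= mulr_sumr; apply: eq_bigr => v' _.
  rewrite !rmorphM /= conjCK; ring.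
exact: mul_conjC_ge0.
Qed.
End Kern.

Set Implicit Arguments. Unset Strict Implicit. Unset Printing Implicit Defensive.

Section Site.
Variables (R : realType) (n q : nat).
Local Notation C := R[i].

Definition Sw (a b a' b' : 'I_q) : C := ((a' == b) && (b' == a))%:R.
Definition Idk (a b a' b' : 'I_q) : C := ((a' == a) && (b' == b))%:R.
Definition aK (T : {set 'I_n}) (i : 'I_n) :=
  if i \in T then (fun a b a' b' => q%:R * Sw a b a' b' - Idk a b a' b') else Idk.

Lemma natb_and (b1 b2 : bool) : ((b1 && b2)%:R : C) = b1%:R * b2%:R.
Proof. by case: b1; case: b2; rewrite ?mulr1 ?mulr0 ?mul0r. Qed.

Lemma sum_delta (a : 'I_q) (F : 'I_q -> C) : \sum_c (a == c)%:R * F c = F a.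
Proof.
rewrite (bigD1 a) //= eqxx mul1r big1 ?addr0 // => c /negbTE ca.
by rewrite eq_sym ca mul0r.
Qed.

Lemma sum_delta1 (a : 'I_q) : \sum_c ((a == c)%:R : C) = 1.
Proof. by rewrite -[RHS](sum_delta a (fun _ => 1)); apply: eq_bigr => c _; rewrite mulr1. Qed.

Lemma site_id (q0 : (0 < q)%N) (a b a' b' : 'I_q) :
  \sum_(cd : 'I_q * 'I_q) ((cd.1 != cd.2)%:R * q%:R) * ((a == cd.1) && (a' == cd.2))%:R
        * (((b' == cd.1) && (b == cd.2))%:R)^*
  + \sum_(c : 'I_q) q%:R * ((a == a')%:R * ((a == c)%:R - q%:R^-1))
        * ((b' == b)%:R * ((b' == c)%:R - q%:R^-1))^*
  = q%:R * Sw a b a' b' - Idk a b a' b'.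
Proof.
have qn0 : (q%:R : C) != 0 by rewrite pnatr_eq0 -lt0n.
have cq : (q%:R^-1 : C)^* = q%:R^-1 by rewrite fmorphV /= conjC_nat.
rewrite -(pair_big xpredT xpredT (fun c d => ((c != d)%:R * q%:R) * ((a == c) && (a' == d))%:R
        * (((b' == c) && (b == d))%:R)^*)) /=.
have E1 : \sum_(c : 'I_q) \sum_(d : 'I_q) ((c != d)%:R * q%:R) * ((a == c) && (a' == d))%:R
        * (((b' == c) && (b == d))%:R : C)^* = (a != a')%:R * q%:R * (b' == a)%:R * (b == a')%:R :> C.
  transitivity (\sum_(c : 'I_q) (a == c)%:R * \sum_(d : 'I_q) (a' == d)%:R *
     ((c != d)%:R * q%:R * ((b' == c)%:R * (b == d)%:R)) : C).
    apply: eq_bigr => c _; rewrite mulr_sumr; apply: eq_bigr => d _.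
    rewrite conjC_nat !natb_and; ring.
  rewrite sum_delta sum_delta; ring.
have E2 : \sum_(c : 'I_q) q%:R * ((a == a')%:R * ((a == c)%:R - q%:R^-1))
        * ((b' == b)%:R * ((b' == c)%:R - q%:R^-1))^*
     = q%:R * (a == a')%:R * (b' == b)%:R * ((a == b')%:R - q%:R^-1) :> C.
  have -> : \sum_(c : 'I_q) q%:R * ((a == a')%:R * ((a == c)%:R - q%:R^-1))
      * ((b' == b)%:R * ((b' == c)%:R - q%:R^-1))^* =
      q%:R * (a == a')%:R * (b' == b)%:R * (\sum_(c : 'I_q) ((a == c)%:R * (b' == c)%:R)
         - \sum_(c : 'I_q) (a == c)%:R * q%:R^-1 - \sum_(c : 'I_q) (b' == c)%:R * q%:R^-1
         + \sum_(c : 'I_q) q%:R^-1 * q%:R^-1 : C).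
    rewrite -!sumrB -big_split /= mulr_sumr; apply: eq_bigr => c _.
    rewrite rmorphM /= rmorphB /= !conjC_nat cq; ring.
  rewrite sum_delta -!mulr_suml !sum_delta1 sumr_const card_ord.
  rewrite (eq_sym b' a) -[q%:R^-1 *+ q]mulr_natr mulVf // mul1r; ring.
rewrite E1 E2 /Sw /Idk !natb_and.
case: (eqVneq a a') => [<-|aa'].
  rewrite /= mul0r.
  case: (eqVneq b' b) => [->|bb']; last first.
    by case: (eqVneq b' a) => [eba|_]; [subst b'; rewrite (negbTE bb') /= | rewrite /=]; ring.
  rewrite ?eqxx (eq_sym b a); case: (a == b) => /=.
    by field.
  by field.
rewrite (eq_sym a' b) /=; ring.
Qed.

End Site.

Set Implicit Arguments. Unset Strict Implicit. Unset Printing Implicit Defensive.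

Section Pos.
Variables (R : realType) (n q : nat) (psi : config n q -> R[i]).
Local Notation C := R[i].

Definition aC (T : {set 'I_n}) : C := kernP psi (siteK (@aK R n q T)).

Definition wT (T : {set 'I_n}) (i : 'I_n) (j : ('I_q * 'I_q) + 'I_q) : C :=
  if i \in T then (match j with inl cd => (cd.1 != cd.2)%:R * q%:R | inr _ => q%:R end)
  else (match j with inl _ => 0 | inr _ => q%:R^-1 end).

Definition GT (T : {set 'I_n}) (i : 'I_n) (j : ('I_q * 'I_q) + 'I_q) (x y : 'I_q) : C :=
  if i \in T then (match j with inl cd => ((x == cd.1) && (y == cd.2))%:R
                              | inr c => (x == y)%:R * ((x == c)%:R - q%:R^-1) end)
  else (x == y)%:R.

Lemma aC_ge0 (q0 : (0 < q)%N) T : 0 <= aC T.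
Proof.
have qn0 : (q%:R : C) != 0 by rewrite pnatr_eq0 -lt0n.
apply: (@kern_sos R n q psi _ (wT T) (GT T)).
  move=> i [[c d]|c]; rewrite /wT; case: (i \in T) => //=.
  - by apply: mulr_ge0; apply: ler0n.
  - by rewrite invr_ge0 ler0n.
move=> i a b a' b'; rewrite big_sumType /= /aK /wT /GT.
case: (i \in T).
  by rewrite -(site_id R q0 a b a' b').
rewrite big1 ?add0r; last by move=> ? _; rewrite !mul0r.
rewrite conjC_nat.
transitivity (\sum_(c : 'I_q) q%:R^-1 * ((a == a')%:R * (b' == b)%:R) : C); last first.
  by apply: eq_bigr => c _; rewrite mulrA.
rewrite sumr_const card_ord -[_ *+ q]mulr_natl mulrA mulfV // mul1r /Idk natb_and (eq_sym a' a).
by [].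
Qed.
End Pos.

Set Implicit Arguments. Unset Strict Implicit. Unset Printing Implicit Defensive.

Section Pur.
Variables (R : realType) (n q : nat) (psi : config n q -> R[i]).
Local Notation C := R[i].
Local Notation cfg := (config n q).

Definition PurK (S : {set 'I_n}) (i : 'I_n) := if i \in S then @Sw R q else @Idk R q.
Definition Pur (S : {set 'I_n}) : C := kernP psi (siteK (PurK S)).

Lemma P_expand (S : {set 'I_n}) : q%:R ^+ #|S| * Pur S = \sum_(T : {set 'I_n} | T \subset S) aC psi T.
Proof.
rewrite /Pur /aC -kernP_scale -kernP_sum /kernP.
apply: eq_bigr => u _; apply: eq_bigr => v _; apply: eq_bigr => u' _; apply: eq_bigr => v' _.
congr (_ * _).
rewrite /siteK -prodr_const big_mkcond /= -big_split /=.
set F := fun i : 'I_n => if i \in S then (fun a b a' b' => q%:R * @Sw R q a b a' b' - @Idk R q a b a' b')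
                         else (fun _ _ _ _ => 0).
rewrite (eq_bigr (fun i => F i (u i) (v i) (u' i) (v' i) + @Idk R q (u i) (v i) (u' i) (v' i))); last first.
  move=> i _; rewrite /F /PurK; case: (i \in S); rewrite ?mul1r ?add0r //.
  by rewrite subrK.
rewrite bigA_distr [RHS]big_mkcond /=; apply: eq_bigr => T _.
case: ifP => TS.
  apply: eq_bigr => i _; rewrite /aK /F.
  by case: ifP => // iT; rewrite (subsetP TS i iT).
have [i iT iS] := subsetPn (negbT TS).
by rewrite (bigD1 i) //= iT /F (negbTE iS) mul0r.
Qed.

Lemma prod_nat_forall (b : 'I_n -> bool) : \prod_i ((b i)%:R : C) = [forall i, b i]%:R.
Proof.
case: forallP => [Hb|Hb].
  by rewrite big1 // => i _; rewrite Hb.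
have /existsP [i /negbTE bi] : [exists i, ~~ b i] by rewrite -negb_forall; apply/forallP.
by rewrite (bigD1 i) //= bi mul0r.
Qed.

Lemma sum_delta_r (T : finType) (y : T) (F : T -> C) : \sum_x F x * (x == y)%:R = F y.
Proof.
rewrite (bigD1 y) //= eqxx mulr1 big1 ?addr0 // => x /negbTE ->.
by rewrite mulr0.
Qed.

Lemma siteK_Pur (S : {set 'I_n}) (u v u' v' : cfg) :
  siteK (PurK S) u v u' v' = ((u' == glue v S u) && (v' == glue u S v))%:R.
Proof.
rewrite /siteK.
transitivity (\prod_i (((u' i == glue v S u i) && (v' i == glue u S v i))%:R : C)).
  apply: eq_bigr => i _; rewrite /PurK /glue !ffunE /Sw /Idk.
  by case: (i \in S).
rewrite prod_nat_forall; congr ((nat_of_bool _)%:R).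
apply/forallP/andP => [H|[/eqP -> /eqP ->] i]; last by rewrite !eqxx.
by split; apply/eqP/ffunP => i; have /andP[/eqP ? /eqP ?] := H i.
Qed.

Lemma Pur_glue (S : {set 'I_n}) : Pur S =
  \sum_(u : cfg) \sum_(v : cfg) psi u * psi v * (psi (glue v S u))^* * (psi (glue u S v))^*.
Proof.
rewrite /Pur /kernP; apply: eq_bigr => u _; apply: eq_bigr => v _.
under eq_bigr do under eq_bigr do rewrite siteK_Pur natb_and mulrA.
transitivity (\sum_(u' : cfg) (\sum_(v' : cfg) (psi u * psi v * (psi u')^* * (psi v')^*) *
   (v' == glue u S v)%:R) * (u' == glue v S u)%:R).
  apply: eq_bigr => u' _; rewrite mulr_suml; apply: eq_bigr => v' _.
  by rewrite mulrAC.
by rewrite sum_delta_r sum_delta_r.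
Qed.


Lemma glueC (S : {set 'I_n}) (u v : cfg) : glue v (~: S) u = glue u S v.
Proof. by apply/ffunP => i; rewrite !ffunE in_setC; case: (i \in S). Qed.

Lemma glue0 (u v : cfg) : glue v set0 u = u.
Proof. by apply/ffunP => i; rewrite !ffunE in_set0. Qed.

Lemma Pur_compl (S : {set 'I_n}) : Pur (~: S) = Pur S.
Proof.
rewrite !Pur_glue exchange_big; apply: eq_bigr => v _; apply: eq_bigr => u _.
rewrite !glueC; ring.
Qed.

Lemma Pur0 : is_pure_state psi -> Pur set0 = 1.
Proof.
move=> H; rewrite Pur_glue.
under eq_bigr do under eq_bigr do rewrite !glue0.
rewrite -[1]mulr1 -{1}H -{1}H mulr_suml; apply: eq_bigr => u _.
rewrite mulr_sumr; apply: eq_bigr => v _; ring.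
Qed.

End Pur.

Set Implicit Arguments. Unset Strict Implicit. Unset Printing Implicit Defensive.

Section Unif.
Variables (R : realType) (n q : nat) (psi : config n q -> R[i]).
Local Notation C := R[i].
Local Notation cfg := (config n q).

Definition agree (S : {set 'I_n}) (x z : cfg) := [forall i, (i \in S) ==> (z i == x i)].

Lemma count_agree (S : {set 'I_n}) (u : cfg) :
  \sum_(x : cfg) ((agree S u x)%:R : C) = q%:R ^+ (n - #|S|).
Proof.
rewrite /agree.
under eq_bigr do rewrite -(prod_nat_forall R (fun i => (i \in S) ==> (_ i == u i))).
rewrite -(bigA_distr_bigA (fun i c => (((i \in S) ==> (c == u i))%:R : C))) /=.
transitivity (\prod_(i in ~: S) (q%:R : C)); last first.
  rewrite prodr_const; congr (_ ^+ _); have := cardsC S; rewrite card_ord => h; by rewrite -[n in (n - _)%N]h addKn.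
rewrite [RHS]big_mkcond /=; apply: eq_bigr => i _; rewrite in_setC.
case: (i \in S) => /=.
  by rewrite -[RHS](sum_delta (u i) (fun _ => 1)); apply: eq_bigr => c _; rewrite mulr1 eq_sym.
by rewrite sumr_const card_ord.
Qed.

Lemma agreeC (S : {set 'I_n}) (x z : cfg) : agree S x z = agree S z x.
Proof. by apply/forallP/forallP => H i; rewrite eq_sym; apply: H. Qed.

Lemma glue_agree (S : {set 'I_n}) (x u v : cfg) : agree S x u -> glue x S v = glue u S v.
Proof.
move=> /forallP H; apply/ffunP => i; rewrite !ffunE.
by case: ifP => // iS; have /implyP/(_ iS)/eqP -> := H i.
Qed.

Lemma sum4 (I : finType) (F : I -> I -> I -> I -> C) :
  \sum_x \sum_y \sum_u \sum_v F x y u v = \sum_u \sum_v \sum_x \sum_y F x y u v.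
Proof.
under eq_bigr do rewrite exchange_big.
rewrite exchange_big; apply: eq_bigr => u _.
under eq_bigr do rewrite exchange_big.
by rewrite exchange_big.
Qed.

Lemma Pur_unif (q0 : (0 < q)%N) k : k_uniform k psi ->
  forall S : {set 'I_n}, #|S| = k -> Pur psi S = (q%:R ^+ k)^-1.
Proof.
move=> [Hp Hu] S HS.
have qn0 : (q%:R : C) != 0 by rewrite pnatr_eq0 -lt0n.
have kn : (k <= n)%N by rewrite -HS; have := max_card S; rewrite card_ord.
pose g u v := psi u * psi v * (psi (glue v S u))^* * (psi (glue u S v))^*.
pose N : C := q%:R ^+ (n - k).
have L : \sum_x \sum_y reduced_entry psi S x y * reduced_entry psi S y x = N * N * Pur psi S.
  transitivity (\sum_x \sum_y \sum_u \sum_v ((agree S x u)%:R * (agree S y v)%:R * g u v)).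
    apply: eq_bigr => x _; apply: eq_bigr => y _.
    rewrite /reduced_entry !big_mkcond mulr_suml; apply: eq_bigr => u _.
    rewrite [X in _ * X]big_mkcond mulr_sumr; apply: eq_bigr => v _ /=.
    rewrite /agree -/(agree S x u) -/(agree S y v).
    case: ifP => axu; case: ifP => ayv /=;
      rewrite /g ?(glue_agree v axu) ?(glue_agree u ayv); ring.
  rewrite sum4 Pur_glue mulr_sumr; apply: eq_bigr => u _.
  rewrite mulr_sumr; apply: eq_bigr => v _.
  transitivity ((\sum_x ((agree S x u)%:R : C)) * (\sum_y ((agree S y v)%:R : C)) * g u v).
    rewrite !mulr_suml; apply: eq_bigr => x _; rewrite mulr_sumr mulr_suml.
    by apply: eq_bigr => y _.
  rewrite (eq_bigr (fun x => (agree S u x)%:R)); last by move=> x _; rewrite agreeC.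
  rewrite [X in _ * X * _](eq_bigr (fun x => (agree S v x)%:R)); last by move=> x _; rewrite agreeC.
  by rewrite !count_agree HS.
have Rr : \sum_x \sum_y reduced_entry psi S x y * reduced_entry psi S y x =
   q%:R ^+ n * N * ((q%:R ^+ k)^-1 * (q%:R ^+ k)^-1).
  transitivity (\sum_(y : cfg) \sum_(x : cfg) (agree S y x)%:R * ((q%:R ^+ k)^-1 * (q%:R ^+ k)^-1) : C).
    rewrite exchange_big; apply: eq_bigr => y _; apply: eq_bigr => x _.
    rewrite !Hu // /agree.
    have -> : [forall i, (i \in S) ==> (y i == x i)] = [forall i, (i \in S) ==> (x i == y i)].
      by apply/forallP/forallP => H i; rewrite eq_sym; apply: H.
    by case: ifP => _ /=; ring.
  under eq_bigr do rewrite -mulr_suml count_agree HS.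
  rewrite sumr_const card_ffun !card_ord -[_ *+ (q ^ n)]mulr_natl natrX /N; ring.
have qk0 : (q%:R ^+ k : C) != 0 by rewrite expf_neq0.
have N0 : N != 0 by rewrite expf_neq0.
have Hn : (q%:R ^+ n : C) = N * q%:R ^+ k by rewrite /N -exprD subnK.
move: L; rewrite Rr Hn => E.
apply: (@mulfI _ (N * N)); first by rewrite mulf_neq0.
rewrite -E; field.
by rewrite qk0.
Qed.
End Unif.

Set Implicit Arguments. Unset Strict Implicit. Unset Printing Implicit Defensive.

Section Comb.
Variables (V : nmodType) (n : nat).

Lemma sum_subsets (B : {set 'I_n}) (F : nat -> V) :
  \sum_(S : {set 'I_n} | S \subset B) F #|S| = \sum_(m < #|B|.+1) F m *+ 'C(#|B|, m).
Proof.
rewrite (partition_big (fun S : {set 'I_n} => (inord #|S| : 'I_(#|B|).+1)) xpredT) //=.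
apply: eq_bigr => j _.
rewrite (eq_bigr (fun _ => F j)); last first.
  by move=> S /andP[SB /eqP <-]; rewrite inordK // ltnS subset_leq_card.
rewrite sumr_const -(cards_draws B j) cardsE; congr (_ *+ _).
apply: eq_card => S; rewrite !unfold_in /=.
case SB: (S \subset B) => //=.
have lt : (#|S| < #|B|.+1)%N by rewrite ltnS subset_leq_card.
apply/eqP/eqP => [<-|E]; first by rewrite inordK.
by apply: ord_inj; rewrite inordK.

Qed.

Lemma card_compl (T : {set 'I_n}) : #|~: T| = (n - #|T|)%N.
Proof. by have := cardsC T; rewrite card_ord => h; rewrite -[n in (n - _)%N]h addKn. Qed.

Lemma sum_supsets (T : {set 'I_n}) (F : nat -> V) :
  \sum_(S : {set 'I_n} | T \subset S) F #|S| =
  \sum_(m < (n - #|T|).+1) F (#|T| + m)%N *+ 'C(n - #|T|, m).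
Proof.
rewrite (reindex_onto (fun S' => T :|: S') (fun S => S :\: T)); last first.
  by move=> S TS; rewrite -{2}(setID S T) (setIidPr TS).
rewrite -card_compl -(sum_subsets (~: T) (fun m => F (#|T| + m)%N)).
apply: eq_big => S'.
  rewrite subsetUl /= setDUl setDv set0U -disjoints_subset.
  by apply/eqP/idP => [<-|/setDidPl //]; rewrite /disjoint; apply/pred0P => x; rewrite !inE; case: (x \in T); rewrite ?andbF.
move=> /andP[_ /eqP E]; congr (F _).
rewrite setDUl setDv set0U in E.
have /disjoint_setI0 D : [disjoint S' & T] by apply/setDidPl.
by rewrite cardsU setIC D cards0 subn0.
Qed.

Lemma ex_supset (T : {set 'I_n}) d : (#|T| + d <= n)%N ->
  exists S : {set 'I_n}, T \subset S /\ #|S| = (#|T| + d)%N.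
Proof.
elim: d T => [|d IH] T H; first by exists T; rewrite addn0.
have : (0 < #|~: T|)%N by rewrite card_compl; lia.
move=> /card_gt0P [x]; rewrite in_setC => xT.
have [|S [TS HS]] := IH (x |: T); first by rewrite cardsU1 xT; lia.
exists S; split; first by apply: subset_trans TS; apply: subsetUr.
by rewrite HS cardsU1 xT; lia.
Qed.
End Comb.

Unset Implicit Arguments. Set Strict Implicit.


Theorem lemma1 (R : realType) (q n k : nat) (p : nat -> R) :
  (2 <= q)%N ->
  (k.+1 <= n./2)%N ->
  (forall i : nat, (k.+1 <= i)%N -> (i <= n - k.+1)%N -> 0 <= p i) ->
  (forall j : nat, (k.+1 <= j)%N -> (j <= n)%N ->
     \sum_(j <= i < n.+1) p i * ('C(n - j, i - j))%:R <= 0) ->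
  0 < \sum_(n./2.+1 <= i < n.+1)
        p i * ((q%:R : R) ^+ (2 * i - n) - 1) * ('C(n, i))%:R ->
  ~ exists psi : config n q -> R[i], k_uniform k psi.
Proof.
move=> q2 hk hp hsum hpos [psi Hu].
have hh : (n./2 + n./2 <= n <= n./2 + n./2 + 1)%N.
  by have := odd_double_half n; rewrite -addnn; case: (odd n) => /= <-; lia.
have q0 : (0 < q)%N by lia.
pose Q : R[i] := q%:R.
have Qn0 : Q != 0 by rewrite pnatr_eq0; lia.
have Qge0 : 0 <= Q by rewrite ler0n.
pose P (S : {set 'I_n}) := Q ^+ #|S| * Pur psi S.
pose a := aC psi.
have hPa : forall S, P S = \sum_(T : {set 'I_n} | T \subset S) a T by move=> S; apply: P_expand.
have ha0 : forall T, 0 <= a T by move=> T; apply: aC_ge0.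
have ha00 : a set0 = 1.
  have := hPa set0; rewrite /P cards0 expr0 mul1r Pur0; last by case: Hu.
  rewrite (eq_bigl (pred1 set0)) ?big_pred1_eq // => T; by rewrite /= subset0.
have hPk : forall S : {set 'I_n}, #|S| = k -> P S = 1.
  by move=> S HS; rewrite /P (Pur_unif q0 Hu HS) HS divff // expf_neq0.
have hcardn : forall S : {set 'I_n}, (#|S| <= n)%N by move=> S; have := max_card S; rewrite card_ord.
have hsplit : forall S : {set 'I_n}, P S = 1 + \sum_(T : {set 'I_n} | (T \subset S) && (T != set0)) a T.
  by move=> S; rewrite hPa (bigD1 set0) ?sub0set //= ha00.
have hZ : forall T : {set 'I_n}, (0 < #|T|)%N -> (#|T| <= k)%N -> a T = 0.
  move=> T T0 Tk.
  have [|S [TS HS]] := @ex_supset n T (k - #|T|)%N; first by have := hcardn T; lia.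
  have HSk : #|S| = k by rewrite HS; lia.
  have := hPk S HSk; rewrite hsplit (bigD1 T) /=; last by rewrite TS -card_gt0.
  rewrite -{2}(addr0 1) => /addrI E2.
  apply/eqP; rewrite eq_le ha0 andbT -E2 lerDl.
  by apply: sumr_ge0 => T' _; apply: ha0.
have hPs : forall U : {set 'I_n}, (#|U| <= k)%N -> P U = 1.
  move=> U Uk; rewrite hsplit big1 ?addr0 // => T /andP[TU T0].
  by apply: hZ; [rewrite card_gt0 | apply: leq_trans Uk; apply: subset_leq_card].
have hPge : forall S, 1 <= P S.
  by move=> S; rewrite hsplit lerDl; apply: sumr_ge0 => T _; apply: ha0.
have hPc : forall S : {set 'I_n}, (n <= #|S| + #|S|)%N ->
    P S = Q ^+ (2 * #|S| - n) * P (~: S).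
  move=> S HS; rewrite /P Pur_compl card_compl mulrA -exprD.
  by congr (Q ^+ _ * _); have := hcardn S; lia.
pose pc (m : nat) : R[i] := ((p m)%:C)%C.
pose Fk (m : nat) : R[i] := if (k < m)%N then pc m else 0.
pose phi (m : nat) : R[i] := if (n./2 < m)%N then Q ^+ (2 * m - n) else 1.
have hS : forall j, (k < j)%N -> (j <= n)%N ->
    \sum_(m < (n - j).+1) pc (j + m)%N *+ 'C(n - j, m) <= 0.
  move=> j kj jn; have := hsum j kj jn; rewrite -(lecR _ 0) rmorph0 => H.
  apply: le_trans H; rewrite le_eqVlt; apply/orP; left; apply/eqP.
  rewrite rmorph_sum (big_addn 0 _ j) /= -subSn // big_mkord; apply: eq_bigr => i _.
  by rewrite rmorphM /= rmorph_nat addnK addnC mulr_natr.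
have Up : \sum_(S : {set 'I_n}) Fk #|S| * P S <= \sum_(m < n.+1) Fk m *+ 'C(n, m).
  have -> : \sum_(S : {set 'I_n}) Fk #|S| * P S =
     \sum_(T : {set 'I_n}) a T * \sum_(S : {set 'I_n} | T \subset S) Fk #|S|.
    under eq_bigr do rewrite hPa mulr_sumr.
    rewrite (exchange_big_dep xpredT) //=; apply: eq_bigr => T _.
    by rewrite mulr_sumr; apply: eq_bigr => S _; rewrite mulrC.
  rewrite (bigD1 set0) //= ha00 mul1r sum_supsets cards0 subn0.
  apply: ler_wnDr; last by apply: lexx.
  apply: sumr_le0 => T T0.
  case: (ltnP k #|T|) => kT.
    apply: mulr_ge0_le0; first exact: ha0.
    rewrite sum_supsets; apply: le_trans (hS _ kT (hcardn T)).
    rewrite le_eqVlt; apply/orP; left; apply/eqP; apply: eq_bigr => m _.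
    by rewrite /Fk ifT //; lia.
  by rewrite hZ ?mul0r // card_gt0.
have Lo : \sum_(m < n.+1) (Fk m * phi m) *+ 'C(n, m) <= \sum_(S : {set 'I_n}) Fk #|S| * P S.
  have := sum_supsets (set0 : {set 'I_n}) (fun m => Fk m * phi m).
  rewrite cards0 subn0 /= => <-.
  rewrite (eq_bigl xpredT); last by move=> S; rewrite sub0set.
  apply: ler_sum => S _.
  rewrite /Fk; case: ifP => ki; last by rewrite !mul0r.
  have ki' : (k < #|S|)%N by rewrite ki.
  case: (leqP (n - k) #|S|) => hi.
    have -> : P S = phi #|S|.
      rewrite hPc; last by lia.
      rewrite hPs; last by rewrite card_compl; lia.
      by rewrite mulr1 /phi ifT //; lia.
    by [].
  apply: ler_wpM2l; first by rewrite /pc ler0c; apply: hp; [exact: ki' | move: hi; clear; move: (#|S|) => s; lia].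
  rewrite /phi; case: ifP => hi2; last exact: hPge.
  rewrite hPc; last by move: hi2 hh; clear; move: (#|S|) (n./2) => s h; lia.
  rewrite -{1}[Q ^+ _]mulr1; apply: ler_wpM2l; [exact: exprn_ge0 | exact: hPge].
have Deq : \sum_(m < n.+1) (Fk m * (phi m - 1)) *+ 'C(n, m) =
    (\sum_(n./2.+1 <= i < n.+1) p i * ((q%:R : R) ^+ (2 * i - n) - 1) * ('C(n, i))%:R)%:C%C.
  rewrite rmorph_sum /= -(big_mkord xpredT (fun m => (Fk m * (phi m - 1)) *+ 'C(n, m))).
  rewrite (@big_cat_nat _ _ _ n./2.+1) //=; last by lia.
  rewrite big_nat_cond big1 ?add0r; last first.
    move=> i /andP[/andP[_ hi] _].
    by rewrite /phi ifF ?subrr ?mulr0 ?mul0rn // ltnNge -ltnS hi.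
  apply: eq_big_nat => i /andP[hi1 hi2].
  rewrite /Fk /phi ifT; last by lia.
  rewrite ifT //.
  by rewrite /pc /Q !rmorphM /= rmorphB /= rmorphXn /= !rmorph_nat rmorph1 mulr_natr.
have D : \sum_(m < n.+1) (Fk m * (phi m - 1)) *+ 'C(n, m) <= 0.
  rewrite (eq_bigr (fun m : 'I_n.+1 => (Fk m * phi m) *+ 'C(n, m) - Fk m *+ 'C(n, m))); last first.
    by move=> m _; rewrite mulrBr mulr1 mulrnBl.
  by rewrite sumrB subr_le0; apply: le_trans Lo Up.
move: hpos; rewrite -(ltcR 0) rmorph0 -Deq => H.
by have := lt_le_trans H D; rewrite ltxx.
Qed.
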